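(* Let $n\ge2$, let $a_0,\dots,a_n$ be indeterminates and $P=\sum_{i=0}^na_ix^i$. For each $\boldsymbol\mu=(\mu_1,\dots,\mu_m)\in\mathcal M(n)$ with conjugate $\bar{\boldsymbol\mu}$, define $\tilde G_0=P$, $\tilde G_i=R_{\bar\mu_i}(\tilde G_{i-1},\tilde G_{i-1}')$ for $i\ge1$, regarded as polynomials in $x$ of formal degree $s_i=\sum_{k=i+1}^{\mu_1}\bar\mu_k$, and let $\mathcal S_{\boldsymbol\mu}$ be the set of polynomials in $a_0,\dots,a_n$ consisting of $D_j(\tilde G_i)$ for $0\le i\le\mu_1-2$ and $\bar\mu_{i+1}+1\le j\le s_i$; $D_{s_{\mu_1-1}}(\tilde G_{\mu_1-1})$; and $D_j(\tilde G_i)$ for $0\le i\le\mu_1-1$ and $1\le j\le\bar\mu_{i+1}$. Let $d_{\rm YHZ}$ be the maximum of the total degrees in $a_0,\dots,a_n$ of the polynomials in $\bigcup_{\boldsymbol\mu\in\mathcal M(n)}\mathcal S_{\boldsymbol\mu}$. Assume that for every $\boldsymbol\mu\in\mathcal M(n)$ and every $0\le i\le\mu_1-1$, the coefficient of $x^{s_i}$ in $\tilde G_i$ and the principal subresultant coefficient $\overline{R_{s_i}(\tilde G_i,\tilde G_i')}$ are not identically zero as polynomials in $a_0,\dots,a_n$. Then $d_{\rm YHZ}\ge 3^{\lfloor n/2\rfloor}$.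
   Context: $\mathcal M(n)$ is the set of nonincreasing tuples $(\mu_1,\dots,\mu_m)$ of positive integers with sum $n$; the conjugate is $\bar{\boldsymbol\mu}=(\bar\mu_1,\bar\mu_2,\dots)$ with $\bar\mu_i=\#\{j:\mu_j\ge i\}$. For two polynomials $F_0,F_1$ with $d_0=\deg F_0$ (formal degree), $d_1=\deg F_1$, and $0\le\delta_1\le d_0$: put $\delta_0=d_1+\delta_1-d_0$ if $\delta_1\ge1$ and $d_1+\delta_1\ge d_0$, else $\delta_0=1$; $\boldsymbol M$ is the $(\delta_0+\delta_1)\times(\delta_0+d_0)$ matrix with rows the coefficient vectors of $x^{\delta_0-1}F_0,\dots,F_0,x^{\delta_1-1}F_1,\dots,F_1$ w.r.t. $x^{\delta_0+d_0-1},\dots,1$; $R_{\delta_1}(F_0,F_1)=\operatorname{dp}\boldsymbol M$ where for a $p\times q$ matrix ($p\le q$) $\operatorname{dp}\boldsymbol M=\sum_{i=0}^{q-p}\det[\boldsymbol M_1,\dots,\boldsymbol M_{p-1},\boldsymbol M_{q-i}]x^i$; $\overline{R_{\delta_1}(F_0,F_1)}$ is its coefficient of $x^{d_0-\delta_1}$. Discriminant sequence: for $G=\sum_{i=0}^s b_ix^i$ (formal degree $s$), the discrimination matrix is the $2s\times2s$ matrix whose rows $2k-1$, $2k$ ($k=1,\dots,s$) are the coefficient vectors of $x^{s-k}G$ and $x^{s-k}G'$ w.r.t. $x^{2s-1},\dots,1$; $D_j(G)$ is its leading principal $2j\times2j$ minor. *)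

(* Defs.v *)
From HB Require Import structures.
From mathcomp Require Import all_boot all_order all_algebra.
From mathcomp Require Import mpoly.
Set Implicit Arguments. Unset Strict Implicit. Unset Printing Implicit Defensive.
Import GRing.Theory.
Local Open Scope ring_scope.

Definition is_partition (n : nat) (mu : seq nat) : Prop :=
  sorted geq mu /\ all (fun k => 0 < k)%N mu /\ sumn mu = n.

(* conjugate, 1-indexed: mubar mu i = #{ j : mu_j >= i } *)
Definition mubar (mu : seq nat) (i : nat) : nat := count (fun k => i <= k)%N mu.

Definition mu1 (mu : seq nat) : nat := head 0%N mu.

Definition sdeg (mu : seq nat) (i : nat) : nat :=
  (\sum_(i.+1 <= k < (mu1 mu).+1) mubar mu k)%N.

Section Gen.
Variable R : comNzRingType.

(* coefficient of x^pw in x^k F *)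
Definition coefshift (k : nat) (F : {poly R}) (pw : nat) : R :=
  if (k <= pw)%N then F`_(pw - k) else 0.

(* dp of a p x q matrix given by its entries e r c (0-indexed):
   sum_{i=0}^{q-p} det[M_1,...,M_{p-1},M_{q-i}] x^i *)
Definition dp (p q : nat) (e : nat -> nat -> R) : {poly R} :=
  \sum_(i < (q - p).+1)
     (\det (\matrix_(r < p, c < p) e r (if (c < p.-1)%N then (c : nat) else (q.-1 - i)%N)))%:P
       * 'X^i.

Definition delta0 (d0 d1 delta1 : nat) : nat :=
  if (1 <= delta1)%N && (d0 <= d1 + delta1)%N then (d1 + delta1 - d0)%N else 1%N.

(* entries of M: rows x^{delta0-1}F0,...,F0,x^{delta1-1}F1,...,F1 w.r.t.
   x^{delta0+d0-1},...,1 *)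
Definition resmx_entry (d0 d1 delta1 : nat) (F0 F1 : {poly R}) (r c : nat) : R :=
  let dl0 := delta0 d0 d1 delta1 in
  let pw := ((dl0 + d0).-1 - c)%N in
  if (r < dl0)%N then coefshift (dl0.-1 - r) F0 pw
  else coefshift (delta1.-1 - (r - dl0)) F1 pw.

(* R_{delta1}(F0,F1) with formal degrees d0 = deg F0, d1 = deg F1 *)
Definition Rsub (d0 d1 delta1 : nat) (F0 F1 : {poly R}) : {poly R} :=
  let dl0 := delta0 d0 d1 delta1 in
  dp (dl0 + delta1) (dl0 + d0) (resmx_entry d0 d1 delta1 F0 F1).

Definition Rbar (d0 d1 delta1 : nat) (F0 F1 : {poly R}) : R :=
  (Rsub d0 d1 delta1 F0 F1)`_(d0 - delta1).

(* discrimination matrix of G of formal degree s: rows 2k-1, 2k are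
   x^{s-k}G, x^{s-k}G' w.r.t. x^{2s-1},...,1 (0-indexed row r: k = r/2+1) *)
Definition discr_entry (s : nat) (G : {poly R}) (r c : nat) : R :=
  coefshift (s.-1 - r./2) (if odd r then G^`() else G) ((2 * s).-1 - c).

Definition Dj (s j : nat) (G : {poly R}) : R :=
  \det (\matrix_(r < 2 * j, c < 2 * j) discr_entry s G r c).

End Gen.

Definition Apoly (n : nat) := {mpoly rat[n.+1]}.

Definition Pgen (n : nat) : {poly Apoly n} :=
  \sum_(i < n.+1) ('X_i : Apoly n)%:P * 'X^i.

Fixpoint Gt (n : nat) (mu : seq nat) (i : nat) : {poly Apoly n} :=
  match i with
  | 0 => Pgen n
  | i'.+1 => Rsub (sdeg mu i') (sdeg mu i').-1 (mubar mu i'.+1) (Gt n mu i') (Gt n mu i')^`()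
  end.

Definition inS (n : nat) (mu : seq nat) (q : Apoly n) : Prop :=
  (exists i j, (i.+2 <= mu1 mu)%N /\ (mubar mu i.+1 + 1 <= j <= sdeg mu i)%N /\
       q = Dj (sdeg mu i) j (Gt n mu i))
  \/ q = Dj (sdeg mu (mu1 mu).-1) (sdeg mu (mu1 mu).-1) (Gt n mu (mu1 mu).-1)
  \/ (exists i j, (i < mu1 mu)%N /\ (1 <= j <= mubar mu i.+1)%N /\
       q = Dj (sdeg mu i) j (Gt n mu i)).

Arguments inS : clear implicits.

(* total degree in a_0..a_n (msize = 1 + total degree, msize 0 = 0) *)
Definition totdeg (n : nat) (q : Apoly n) : nat := (msize q).-1.
Arguments totdeg {n} q.

(* Main.v *)
Require Import Defs.
From HB Require Import structures.
From mathcomp Require Import all_boot all_order all_algebra.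
From mathcomp Require Import mpoly zify ring.
Import GRing.Theory.
Local Open Scope ring_scope.
Section H.
Variable n : nat.
Local Notation A := (Apoly n).

Lemma prod_homog d m (F : 'I_m -> A) :
  (forall i, F i \is d.-homog) -> \prod_(i < m) F i \is (m * d)%N.-homog.
Proof.
elim: m F => [|m IH] F hF; first by rewrite big_ord0 mul0n dhomog1.
rewrite big_ord_recr /= mulSn addnC; apply: dhomogM; last exact: hF.
by apply: IH.
Qed.

Lemma sgn_homog k : ((-1) ^+ k : A) \is 0.-homog.
Proof.
elim: k => [|k IH]; first by rewrite expr0 dhomog1.
by rewrite exprS -[0%N]/(0+0)%N; apply: dhomogM => //; rewrite rpredN dhomog1.
Qed.

Lemma det_homog d m (M : 'M[A]_m) :
  (forall i j, M i j \is d.-homog) -> \det M \is (m * d)%N.-homog.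
Proof.
move=> hM; rewrite /determinant; apply: rpred_sum => s _.
rewrite -[(m * d)%N]add0n; apply: dhomogM; last by apply: prod_homog.
exact: sgn_homog.
Qed.

Lemma coef_dp p q (e : nat -> nat -> A) t :
  (dp p q e)`_t = \sum_(i < (q - p).+1)
     (\det (\matrix_(r < p, c < p) e r (if (c < p.-1)%N then (c : nat) else (q.-1 - i)%N)))
       * (t == i)%:R.
Proof.
rewrite /dp coef_sum; apply: eq_bigr => i _.
by rewrite coefCM coefXn.
Qed.

Lemma dp_homog d p q (e : nat -> nat -> A) :
  (forall r c, e r c \is d.-homog) -> forall t, (dp p q e)`_t \is (p * d)%N.-homog.
Proof.
move=> he t; rewrite coef_dp; apply: rpred_sum => i _.
rewrite mulr_natr; apply: rpredMn; apply: det_homog => r c; rewrite mxE; exact: he.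
Qed.

Lemma dp_hi p q (e : nat -> nat -> A) t : (q - p < t)%N -> (dp p q e)`_t = 0.
Proof.
move=> ht; rewrite coef_dp big1 // => i _.
have : (i < t)%N by apply: (leq_ltn_trans _ ht); rewrite -ltnS.
by rewrite ltn_neqAle eq_sym => /andP [/negbTE -> _]; rewrite mulr0.
Qed.

Lemma coefshift_homog d k (F : {poly A}) :
  (forall t, F`_t \is d.-homog) -> forall pw, coefshift k F pw \is d.-homog.
Proof. by move=> hF pw; rewrite /coefshift; case: ifP => // _; rewrite dhomog0. Qed.

Lemma deriv_homog d (F : {poly A}) :
  (forall t, F`_t \is d.-homog) -> forall t, F^`()`_t \is d.-homog.
Proof. by move=> hF t; rewrite coef_deriv rpredMn. Qed.

Lemma Pgen_homog t : (Pgen n)`_t \is 1.-homog.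
Proof.
rewrite /Pgen coef_sum; apply: rpred_sum => i _.
rewrite coefCM coefXn mulr_natr; apply: rpredMn.
by rewrite dhomogX; apply/eqP; exact: mdeg1.
Qed.

Fixpoint Hdeg (mu : seq nat) (i : nat) : nat :=
  match i with
  | 0 => 1%N
  | i'.+1 => ((delta0 (sdeg mu i') (sdeg mu i').-1 (mubar mu i'.+1) + mubar mu i'.+1)
             * Hdeg mu i')%N
  end.

Lemma Gt_homog mu i t : (Gt n mu i)`_t \is (Hdeg mu i).-homog.
Proof.
elim: i t => [|i IH] t /=; first exact: Pgen_homog.
rewrite /Rsub; apply: dp_homog => r c; rewrite /resmx_entry.
by case: ifP => _; apply: coefshift_homog => //; apply: deriv_homog.
Qed.

Lemma Dj_homog d s j (G : {poly A}) :
  (forall t, G`_t \is d.-homog) -> Dj s j G \is (2 * j * d)%N.-homog.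
Proof.
move=> hG; apply: det_homog => r c; rewrite mxE /discr_entry.
by apply: coefshift_homog; case: ifP => _ //; apply: deriv_homog.
Qed.

Lemma homog_totdeg d (q : A) : q != 0 -> q \is d.-homog -> totdeg q = d.
Proof.
move=> nz hq; rewrite /totdeg -(mlead_deg nz) /=.
by move/dhomogP: hq => ->; last exact: mlead_supp.
Qed.

End H.

Section C.
Variable n : nat.
Local Notation A := (Apoly n).

Lemma coefshiftE k (F : {poly A}) pw : (k <= pw)%N -> coefshift k F pw = F`_(pw - k).
Proof. by rewrite /coefshift => ->. Qed.
Lemma coefshift0 k (F : {poly A}) pw : (pw < k)%N -> coefshift k F pw = 0.
Proof. by rewrite /coefshift ltnNge => /negbTE ->. Qed.

Lemma det2 (R : comNzRingType) (M : 'M[R]_2) :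
  \det M = M ord0 ord0 * M ord_max ord_max - M ord0 ord_max * M ord_max ord0.
Proof.
rewrite (expand_det_row _ ord0) !big_ord_recl big_ord0 /cofactor !det_mx11 !mxE /=.
rewrite addr0 expr0 expr1 mul1r mulN1r mulrN.
by congr (_ * M _ _ - M _ _ * M _ _); apply/val_inj.
Qed.

Lemma D1E s (G : {poly A}) : (0 < s)%N -> G`_(s.+1) = 0 -> Dj s 1 G = G`_s * (G`_s *+ s).
Proof.
case: s => [|s] // _ hG; rewrite /Dj.
change (\det (\matrix_(r < 2, c < 2) discr_entry s.+1 G r c) = G`_s.+1 * (G`_s.+1 *+ s.+1)).
rewrite det2 !mxE /discr_entry.
have -> : (2 * s.+1).-1 = (s + s.+1)%N by lia.
rewrite /= !subn0 !coefshiftE; try lia.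
have -> : (s + s.+1 - s = s.+1)%N by lia.
have -> : (s + s.+1 - 1 - s = s)%N by lia.
by rewrite !coef_deriv hG mul0rn mulr0 subr0.
Qed.

Lemma det3f (R : comNzRingType) (f : nat -> nat -> R) :
  \det (\matrix_(i < 3, j < 3) f i j) =
    f 0%N 0%N * (f 1%N 1%N * f 2%N 2%N - f 1%N 2%N * f 2%N 1%N) - f 0%N 1%N * (f 1%N 0%N * f 2%N 2%N - f 1%N 2%N * f 2%N 0%N)
    + f 0%N 2%N * (f 1%N 0%N * f 2%N 1%N - f 1%N 1%N * f 2%N 0%N).
Proof.
rewrite (expand_det_row _ ord0) !big_ord_recl big_ord0 /cofactor !det2 !mxE /=.
ring.
Qed.

Lemma det4f (R : comNzRingType) (f : nat -> nat -> R) :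
  f 1%N 0%N = 0 -> f 2%N 0%N = 0 -> f 3%N 0%N = 0 ->
  \det (\matrix_(i < 4, j < 4) f i j) =
    f 0%N 0%N * \det (\matrix_(i < 3, j < 3) f i.+1 j.+1).
Proof.
move=> h1 h2 h3.
rewrite (expand_det_col _ ord0) !big_ord_recl big_ord0 !mxE /= h1 h2 h3 !mul0r !addr0.
rewrite /cofactor expr0 mul1r; congr (_ * \det _).
by apply/matrixP => i j; rewrite !mxE.
Qed.

Lemma D2E (G : {poly A}) : (forall t, (2 < t)%N -> G`_t = 0) ->
  Dj 2 2 G = - G`_2 * Rbar 2 1 2 G G^`().
Proof.
move=> hG; rewrite /Dj.
change (\det (\matrix_(r < 4, c < 4) discr_entry 2 G r c) = - G`_2 * Rbar 2 1 2 G G^`()).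
rewrite det4f; first last.
- by rewrite /discr_entry /coefshift /= coef_deriv hG // mul0rn.
- by rewrite /discr_entry /coefshift /= hG.
- by rewrite /discr_entry /coefshift /= coef_deriv hG // mul0rn.
rewrite (@det3f _ (fun a b => discr_entry 2 G a.+1 b.+1)) /Rbar /Rsub coef_dp /= big_ord_recl big_ord0 /= mulr1 addr0.
rewrite (@det3f _ (fun a b => resmx_entry 2 1 2 G G^`() a (if (b < 0 + 2)%N then b else (0 + 2 - 0)%N))).
rewrite /discr_entry /resmx_entry /coefshift /=.
rewrite ?mul1n /= !coef_deriv /=.
rewrite ?(subn0, subnn, subSS, add0n).
have h3 : G`_3 = 0 by apply: hG.
rewrite h3 mul0rn.
ring.
Qed.
End C.

Section D.
Variable n : nat.
Local Notation A := (Apoly n).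

Lemma sdeg_rec mu i : (i < mu1 mu)%N -> sdeg mu i = (mubar mu i.+1 + sdeg mu i.+1)%N.
Proof. by move=> hi; rewrite /sdeg big_ltn. Qed.

Lemma Gt_hi mu i t : (i <= mu1 mu)%N -> (i = 0%N -> sdeg mu 0 = n) ->
  (sdeg mu i < t)%N -> (Gt n mu i)`_t = 0.
Proof.
case: i => [|i] hi h0 ht /=.
  rewrite h0 // in ht; rewrite /Pgen coef_sum big1 // => j _.
  rewrite coefCM coefXn.
  have : (j < t)%N by apply: (leq_ltn_trans _ ht); rewrite -ltnS.
  by rewrite ltn_neqAle eq_sym => /andP [/negbTE -> _]; rewrite mulr0.
rewrite /Rsub; apply: dp_hi.
rewrite subnDl (sdeg_rec _ _ hi) addKn //.
Qed.

Lemma Hdeg3 mu i : (i < mu1 mu)%N -> (forall j, (0 < j <= i)%N -> mubar mu j = 2%N) ->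
  Hdeg mu i = (3 ^ i)%N.
Proof.
elim: i => [|i IH] hi hm //=.
rewrite IH; last by move=> j /andP [j0 ji]; apply: hm; rewrite j0 /= (leq_trans ji).
  2: exact: ltnW.
rewrite hm ?ltn0Sn //= (sdeg_rec _ _ (ltnW hi)) hm ?ltn0Sn //=.
rewrite /delta0.
have -> : ((0 < 2) && (2 + sdeg mu i.+1 <= 1 + sdeg mu i.+1 + 2))%N = true by apply/andP; split => //; lia.
have -> : (1 + sdeg mu i.+1 + 2 - (2 + sdeg mu i.+1) = 1)%N by lia.
by rewrite expnS.
Qed.
End D.

Lemma mubar2 a b j : mubar [:: a; b] j = ((j <= a) + (j <= b))%N.
Proof. by rewrite /mubar /= addn0. Qed.

Theorem mainTheorem6 (n : nat) (hn : (2 <= n)%N) :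
  (forall mu : seq nat, is_partition n mu ->
     forall i : nat, (i < mu1 mu)%N ->
       (Gt n mu i)`_(sdeg mu i) != 0 /\
       Rbar (sdeg mu i) (sdeg mu i).-1 (sdeg mu i) (Gt n mu i) (Gt n mu i)^`() != 0) ->
  exists mu : seq nat, is_partition n mu /\
    exists q : Apoly n, inS n mu q /\ (3 ^ n./2 <= totdeg q)%N.
Proof.
move=> hyp.
have hn2 := odd_double_half n.
case hodd: (odd n) hn2 => /= hn2.
-
  set k := n./2 in hn2 *.
  have k1 : (0 < k)%N by lia.
  set mu := [:: k.+1; k].
  have hmu1 : mu1 mu = k.+1 by [].
  have hmub : forall j, (0 < j <= k)%N -> mubar mu j = 2%N.
    by move=> j hj; rewrite /mu mubar2; lia.
  have hsk : sdeg mu k = 1%N.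
    by rewrite /sdeg hmu1 big_nat1 /mu mubar2; lia.
  have hs0 : sdeg mu 0 = n.
    rewrite /sdeg hmu1 big_nat_recr //= (eq_big_nat _ _ (F2 := fun _ => 2%N)); last first.
      by move=> j hj; apply: hmub; lia.
    by rewrite sum_nat_const_nat ltnSn ltnn; lia.
  have pmu : is_partition n mu.
    rewrite /is_partition /= leqnSn k1; split => //; split => //; lia.
  have [hG _] := hyp mu pmu k (ltac:(by rewrite hmu1)).
  rewrite hsk in hG.
  exists mu; split => //.
  exists (Dj 1 1 (Gt n mu k)); split.
    right; right; exists k, 1%N; split; first by rewrite hmu1.
    split; last by rewrite hsk.
    rewrite /mu mubar2 leqnn ltnSn; lia.
  have hhi : (Gt n mu k)`_2 = 0.
    apply: Gt_hi; [by rewrite hmu1 | lia | by rewrite hsk].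
  rewrite (@homog_totdeg n (2 * 1 * Hdeg mu k)%N _ _ _).
  + rewrite (Hdeg3 mu k); [|by rewrite hmu1|exact: hmub].
    by rewrite muln1 leq_pmull.
  + rewrite (@D1E n 1 (Gt n mu k) isT hhi) mulr1n.
    exact: mulf_neq0.
  + by apply: Dj_homog => t; apply: Gt_homog.
-
  set k := n./2 in hn2 *.
  have k1 : (0 < k)%N by lia.
  set mu := [:: k; k].
  have hmu1 : mu1 mu = k by [].
  have hmub : forall j, (0 < j <= k)%N -> mubar mu j = 2%N.
    by move=> j hj; rewrite /mu mubar2; lia.
  have hsk : sdeg mu k.-1 = 2%N.
    by rewrite /sdeg hmu1 prednK // big_nat1 /mu mubar2; lia.
  have hs0 : sdeg mu 0 = n.
    rewrite /sdeg hmu1 (eq_big_nat _ _ (F2 := fun _ => 2%N)); last first.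
      by move=> j hj; apply: hmub; lia.
    by rewrite sum_nat_const_nat; lia.
  have pmu : is_partition n mu.
    rewrite /is_partition /= leqnn k1; split => //; split => //; lia.
  have hkl : (k.-1 < mu1 mu)%N by rewrite hmu1; lia.
  have [hG hR] := hyp mu pmu k.-1 hkl.
  rewrite hsk in hG hR.
  exists mu; split => //.
  exists (Dj 2 2 (Gt n mu k.-1)); split.
    right; right; exists k.-1, 2%N; split; first exact: hkl.
    split; last by rewrite hsk.
    rewrite prednK // /mu mubar2 leqnn; lia.
  have hhi : forall t, (2 < t)%N -> (Gt n mu k.-1)`_t = 0.
    move=> t ht; apply: Gt_hi; [lia | by move=> _ | by rewrite hsk].
  rewrite (@homog_totdeg n (2 * 2 * Hdeg mu k.-1)%N _ _ _).
  + rewrite (Hdeg3 mu k.-1) //; last by move=> j hj; apply: hmub; lia.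
    rewrite -{1}(prednK k1) expnS.
    by rewrite leq_mul2r orbT.
  + rewrite (@D2E n (Gt n mu k.-1) hhi).
    by rewrite mulf_neq0 // oppr_eq0.
  + by apply: Dj_homog => t; apply: Gt_homog.
Qed.
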